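(* For every $h\geq 1$, the linear polyacene $L_h$ satisfies $$W_e(L_h)=\tfrac16 h(50h^2+69h+43)\qquad\text{and}\qquad WW_e(L_h)=\tfrac16 h(25h^3+71h^2+77h+79).$$
   Context: The linear polyacene $L_h$ is the benzenoid system (subgraph of the hexagonal lattice) consisting of $h$ hexagons connected linearly, each consecutive pair of hexagons sharing one edge, with all shared edges parallel (so $L_h$ has $4h+2$ vertices and $5h+1$ edges; $L_1$ is the 6-cycle). The distance $d(e,f)$ between edges is the distance between $e$ and $f$ as vertices of the line graph. The edge-Wiener index is $W_e(G)=\sum_{\{e,f\}\subseteq E(G)}d(e,f)$ and the edge-hyper-Wiener index is $WW_e(G)=\frac12\sum_{\{e,f\}\subseteq E(G)}d(e,f)+\frac12\sum_{\{e,f\}\subseteq E(G)}d(e,f)^2$, sums over unordered pairs of distinct edges. *)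

(* Defs.v *)
From HB Require Import structures.
From mathcomp Require Import all_boot all_order all_algebra.
Set Implicit Arguments. Unset Strict Implicit. Unset Printing Implicit Defensive.
Import Order.TTheory GRing.Theory Num.Theory.

Definition ball (T : finType) (r : rel T) (k : nat) (x : T) : {set T} :=
  iter k (fun S : {set T} => S :|: [set y | [exists z in S, r z y]]) [set x].

(* graph distance: number of radii k (< #|T|) whose ball misses y.
   For a connected graph this is exactly the shortest-path distance,
   since every distance is < #|T|. *)
Definition gdist (T : finType) (r : rel T) (x y : T) : nat :=
  \sum_(k < #|T|) (y \notin ball r k x).

(* vertices: two rows (0 = top, 1 = bottom) of 2h+1 vertices each *)
Definition Lvert (h : nat) : finType := ('I_2 * 'I_(2 * h + 1))%type.

(* edges: horizontal edges along each row, and vertical rungs at even columns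
   0,2,...,2h ; hexagon k is spanned by columns 2k,2k+1,2k+2 *)
Definition Ladj (h : nat) : rel (Lvert h) := fun u v =>
  ((u.1 == v.1) && ((u.2.+1 == v.2 :> nat) || (v.2.+1 == u.2 :> nat)))
  || [&& u.2 == v.2, u.1 != v.1 & ~~ odd u.2].

Definition is_Ledge (h : nat) (A : {set Lvert h}) : bool :=
  [exists u, exists v, Ladj u v && (A == [set u; v])].

Definition Ledge (h : nat) : finType := {A : {set Lvert h} | is_Ledge A}.

Definition lineadj (h : nat) : rel (Ledge h) := fun e f =>
  (e != f) && (val e :&: val f != set0).

Definition edist (h : nat) (e f : Ledge h) : nat := gdist (@lineadj h) e f.

Definition We (h : nat) : nat :=
  \sum_(e : Ledge h) \sum_(f : Ledge h | enum_rank e < enum_rank f) edist e f.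

Definition We2 (h : nat) : nat :=
  \sum_(e : Ledge h) \sum_(f : Ledge h | enum_rank e < enum_rank f) (edist e f) ^ 2.

Definition WWe (h : nat) : rat :=
  ((1 / 2) * (We h)%:R + (1 / 2) * (We2 h)%:R)%R.

(* Main.v *)
Require Import Defs.
From HB Require Import structures.
From mathcomp Require Import all_boot all_order all_algebra.
From mathcomp Require Import zify ring.
Import Order.TTheory GRing.Theory Num.Theory.

Definition Ft (t t2 : nat) : nat :=
  nth 0 (nth [::] [:: [::3;3;4;3;4]; [::2;2;3;3;4]; [::1;1;2;2;3]; [::2;3;4;2;3]; [::1;2;3;1;2]] t) t2.
Definition St (t t2 : nat) : nat :=
  nth 0 (nth [::] [:: [::0;1;2;1;2]; [::1;0;1;2;3]; [::2;1;0;3;2]; [::1;2;3;0;1]; [::2;3;2;1;0]] t) t2.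
Definition Dk k t k2 t2 :=
  if k < k2 then 2 * (k2 - k - 1) + Ft t t2
  else if k2 < k then 2 * (k - k2 - 1) + Ft t2 t else St t t2.
Definition Dn (i j : nat) := Dk (i %/ 5) (i %% 5) (j %/ 5) (j %% 5).

Ltac dest t := let H := fresh in case: t => [|[|[|[|[|t]]]]] H //.
Ltac solveD := rewrite /Dk; repeat (case: ifP => ?); rewrite /Ft /St /=; lia.

Lemma DkS k t k2 t2 h : Dk (k + h) t (k2 + h) t2 = Dk k t k2 t2.
Proof. by rewrite /Dk !ltn_add2r !subnDr. Qed.

Lemma DnS h a b : Dn (a + 5 * h) (b + 5 * h) = Dn a b.
Proof.
rewrite /Dn.
have -> : (a + 5 * h) %/ 5 = a %/ 5 + h by lia.
have -> : (b + 5 * h) %/ 5 = b %/ 5 + h by lia.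
have -> : (a + 5 * h) %% 5 = a %% 5 by lia.
have -> : (b + 5 * h) %% 5 = b %% 5 by lia.
by rewrite DkS.
Qed.

Lemma Dsym k t k2 t2 : t < 5 -> t2 < 5 -> Dk k t k2 t2 = Dk k2 t2 k t.
Proof. dest t; dest t2; solveD. Qed.

Lemma Dnsym i j : Dn i j = Dn j i.
Proof. by rewrite /Dn Dsym // ltn_pmod. Qed.

Definition Gt (a b : nat) : nat :=
  nth 0 (nth [::] [:: [::3;4;3;4;5]; [::2;3;3;4;4]; [::1;2;2;3;3]; [::3;4;2;3;4]; [::2;3;1;2;3]] a) b.

Lemma Dfar h a b : a < 5 -> b < 5 -> Dn a (b + (5 * h + 6)) = 2 * h + Gt a b.
Proof.
move=> Ha Hb; rewrite /Dn.
have -> : a %/ 5 = 0 by lia.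
have -> : a %% 5 = a by lia.
have -> : (b + (5 * h + 6)) %/ 5 = h + 1 + (b + 1) %/ 5 by lia.
have -> : (b + (5 * h + 6)) %% 5 = (b + 1) %% 5 by lia.
rewrite /Dk.
have -> : (0 < h + 1 + (b + 1) %/ 5) = true by lia.
have -> : h + 1 + (b + 1) %/ 5 - 0 - 1 = h + (b + 1) %/ 5 by lia.
by move: Ha Hb; dest a; dest b; rewrite /Ft /Gt /=; lia.
Qed.

Lemma splitR (F : nat -> nat) n m :
  \sum_(0 <= i < n + m) F i = \sum_(0 <= i < n) F i + \sum_(0 <= i < m) F (i + n).
Proof.
rewrite (big_cat_nat _ (leq_addr m n)) //=; congr (_ + _).
by rewrite -{1}[n]add0n big_addn addKn.
Qed.

Lemma sum5 (G : nat -> nat) : \sum_(0 <= t < 5) G t = G 0 + G 1 + G 2 + G 3 + G 4.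
Proof. by rewrite !big_nat_recr //= big_geq // add0n. Qed.

Section Sums.
Variable f : nat -> nat.
Definition SS h := \sum_(0 <= i < 5 * h + 1) \sum_(0 <= j < 5 * h + 1) f (Dn i j).
Definition BB h := \sum_(0 <= i < 5 * h + 1) \sum_(0 <= t < 5) f (Dn i (t + (5 * h + 1))).
Definition HH h := \sum_(0 <= i < 5) \sum_(0 <= t < 5) f (Dn i (t + (5 * h + 6))).
Definition EE := \sum_(0 <= s < 5) \sum_(0 <= t < 5) f (Dn (s + 1) (t + 1)).

Lemma SS_rec h : SS h.+1 = SS h + 2 * BB h + EE.
Proof.
rewrite /SS /BB /EE.
have -> : 5 * h.+1 + 1 = (5 * h + 1) + 5 by lia.
rewrite splitR.
under eq_bigr => i _ do rewrite splitR.
rewrite big_split /=.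
under [X in _ + _ + X]eq_bigr => s _ do rewrite splitR.
rewrite big_split /=.
have -> : \sum_(0 <= i < 5) \sum_(0 <= j < 5 * h + 1) f (Dn (i + (5 * h + 1)) j)
  = \sum_(0 <= i < 5 * h + 1) \sum_(0 <= t < 5) f (Dn i (t + (5 * h + 1))).
  rewrite exchange_big /=; apply: eq_bigr => i _; apply: eq_bigr => t _.
  by rewrite Dnsym.
have -> : \sum_(0 <= i < 5) \sum_(0 <= t < 5) f (Dn (i + (5 * h + 1)) (t + (5 * h + 1)))
  = \sum_(0 <= s < 5) \sum_(0 <= t < 5) f (Dn (s + 1) (t + 1)).
  apply: eq_bigr => i _; apply: eq_bigr => t _.
  have E : forall x, x + (5 * h + 1) = (x + 1) + 5 * h by move=> x; lia.
  by rewrite !E DnS.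
lia.
Qed.

Lemma BB_rec h : BB h.+1 = BB h + HH h.
Proof.
rewrite /BB /HH.
have -> : 5 * h.+1 + 1 = 5 + (5 * h + 1) by lia.
rewrite splitR addnC; congr (_ + _).
  apply: eq_bigr => i _; apply: eq_bigr => t _.
  have -> : t + (5 + (5 * h + 1)) = t + (5 * h + 1) + 5 * 1 by lia.
  by rewrite (_ : i + 5 = i + 5 * 1) // DnS.
apply: eq_bigr => i _; apply: eq_bigr => t _.
by rewrite (_ : 5 + (5 * h + 1) = 5 * h + 6) //; lia.
Qed.
End Sums.

Lemma HH1 h : HH id h = 50 * h + 73.
Proof.
rewrite /HH sum5 !sum5 !Dfar // /Gt /=; lia.
Qed.
Lemma HH2 h : HH (fun x => x ^ 2) h = 100 * h ^ 2 + 292 * h + 237.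
Proof.
rewrite /HH sum5 !sum5 !Dfar // /Gt /=; ring.
Qed.
Lemma EE1 : EE id = 36. Proof. by rewrite /EE !sum5. Qed.
Lemma EE2 : EE (fun x => x ^ 2) = 76. Proof. by rewrite /EE !sum5. Qed.
Lemma BB1 h : BB id h = 25 * h ^ 2 + 48 * h + 9.
Proof.
elim: h => [|h IH]; first by rewrite /BB (_ : 5 * 0 + 1 = 1) // big_nat1 sum5.
rewrite BB_rec IH HH1; ring.
Qed.
Lemma BB2 h : 3 * BB (fun x => x ^ 2) h = 100 * h ^ 3 + 288 * h ^ 2 + 323 * h + 57.
Proof.
elim: h => [|h IH]; first by rewrite /BB (_ : 5 * 0 + 1 = 1) // big_nat1 sum5.
rewrite BB_rec mulnDr IH HH2; ring.
Qed.
Lemma SS1 h : 3 * SS id h = h * (50 * h ^ 2 + 69 * h + 43).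
Proof.
elim: h => [|h IH]; first by rewrite /SS (_ : 5 * 0 + 1 = 1) // !big_nat1.
rewrite SS_rec !mulnDr IH BB1 EE1; ring.
Qed.
Lemma SS2 h : 3 * SS (fun x => x ^ 2) h = 50 * h ^ 4 + 92 * h ^ 3 + 85 * h ^ 2 + 115 * h.
Proof.
elim: h => [|h IH]; first by rewrite /SS (_ : 5 * 0 + 1 = 1) // !big_nat1.
rewrite SS_rec !mulnDr IH BB2 EE2; ring.
Qed.

Definition e1r t : nat := (t == 3) || (t == 4).
Definition e1c k t : nat := 2 * k + (t == 2) + (t == 4).
Definition e2r t : nat := [|| t == 0, t == 3 | t == 4].
Definition e2c k t : nat := 2 * k + (t != 0) + (t == 2) + (t == 4).

Definition share k t k2 t2 :=
  [|| (e1r t == e1r t2) && (e1c k t == e1c k2 t2),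
      (e1r t == e2r t2) && (e1c k t == e2c k2 t2),
      (e2r t == e1r t2) && (e2c k t == e1c k2 t2)
    | (e2r t == e2r t2) && (e2c k t == e2c k2 t2)].

Lemma Dshare k t k2 t2 : t < 5 -> t2 < 5 -> (k != k2) || (t != t2) ->
  share k t k2 t2 = (Dk k t k2 t2 == 1).
Proof. dest t; dest t2; rewrite /share /e1r /e2r /e1c /e2c /=; solveD. Qed.

Lemma Dinj k t k2 t2 : t < 5 -> t2 < 5 ->
  ((e1r t == e1r t2) && (e1c k t == e1c k2 t2)) || ((e1r t == e2r t2) && (e1c k t == e2c k2 t2)) ->
  ((e2r t == e1r t2) && (e2c k t == e1c k2 t2)) || ((e2r t == e2r t2) && (e2c k t == e2c k2 t2)) ->
  (k == k2) && (t == t2).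
Proof. dest t; dest t2; rewrite /e1r /e2r /e1c /e2c /=; lia. Qed.

Lemma D0 k t k2 t2 : t < 5 -> t2 < 5 -> (Dk k t k2 t2 == 0) = (k == k2) && (t == t2).
Proof. dest t; dest t2; solveD. Qed.

Lemma Dbound h k t k2 t2 : t < 5 -> t2 < 5 -> 5 * k + t < 5 * h + 1 -> 5 * k2 + t2 < 5 * h + 1 ->
  Dk k t k2 t2 < 5 * h + 1.
Proof. dest t; dest t2; solveD. Qed.

Lemma Erange h k t : t < 5 -> 5 * k + t < 5 * h + 1 ->
  [/\ e1r t < 2, e2r t < 2, e1c k t < 2 * h + 1 & e2c k t < 2 * h + 1].
Proof. dest t; rewrite /e1r /e2r /e1c /e2c /=; move=> Hr; split; lia. Qed.

Lemma Ft_pos t t2 : t < 5 -> t2 < 5 -> 0 < Ft t t2.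
Proof. by dest t; dest t2. Qed.

Lemma Dnear k2 t2 k3 t3 : t2 < 5 -> t3 < 5 -> Dk k2 t2 k3 t3 = 1 ->
  k3 = k2 \/ k3 = k2.+1 \/ k2 = k3.+1.
Proof.
move=> Ht2 Ht3; have := Ft_pos t2 t3 Ht2 Ht3; have := Ft_pos t3 t2 Ht3 Ht2.
move=> A1 A2; rewrite /Dk; case: ifP => ?; [lia|case: ifP => ?; lia].
Qed.

Lemma DkE0 k t t2 : Dk k t k t2 = St t t2.
Proof. by rewrite /Dk ltnn. Qed.
Lemma DkE1 k t t2 : Dk k t k.+1 t2 = Ft t t2.
Proof. by rewrite /Dk ltnSn subSnn. Qed.
Lemma DkE2 k t t2 : Dk k.+1 t k t2 = Ft t2 t.
Proof. by rewrite /Dk (_ : (k.+1 < k) = false) ?ltnSn ?subSnn //; lia. Qed.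

Lemma Dlip k t k2 t2 k3 t3 : t < 5 -> t2 < 5 -> t3 < 5 -> Dk k2 t2 k3 t3 = 1 -> Dk k t k3 t3 <= Dk k t k2 t2 + 1.
Proof.
move=> Ht Ht2 Ht3 H.
case: (Dnear k2 t2 k3 t3 Ht2 Ht3 H) => [E|[E|E]]; subst.
- rewrite DkE0 in H; move: Ht2 Ht3 H Ht; dest t2; dest t3; rewrite /St /= => HH;
    try discriminate HH; dest t; solveD.
- rewrite DkE1 in H; move: Ht2 Ht3 H Ht; dest t2; dest t3; rewrite /Ft /= => HH;
    try discriminate HH; dest t; solveD.
- rewrite DkE2 in H; move: Ht2 Ht3 H Ht; dest t2; dest t3; rewrite /Ft /= => HH;
    try discriminate HH; dest t; solveD.
Qed.

Lemma Dpred h k t k2 t2 : t<5 -> t2<5 -> 5*k+t < 5*h+1 -> 5*k2+t2 < 5*h+1 -> (k != k2) || (t != t2) ->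
 exists k3 t3, [/\ t3 < 5, 5*k3+t3 < 5*h+1, (Dk k t k3 t3).+1 = Dk k t k2 t2 & Dk k3 t3 k2 t2 = 1].
Proof.
dest t; dest t2; move=> Hi Hj Hne.
{ case: (ltngtP k k2) => Hc.
  - case: (ltnP k.+1 k2) => Hc2.
    + by exists (k2 - 1), 2; split; solveD.
    + by exists (k2 - 1), 2; split; solveD.
  - case: (ltnP k2.+1 k) => Hc2.
    + by exists k2, 1; split; solveD.
    + by exists k2, 1; split; solveD.
  - exfalso; lia. }
{ case: (ltngtP k k2) => Hc.
  - case: (ltnP k.+1 k2) => Hc2.
    + by exists (k2 - 1), 2; split; solveD.
    + by exists (k2 - 1), 2; split; solveD.
  - case: (ltnP k2.+1 k) => Hc2.
    + by exists k2, 2; split; solveD.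
    + by exists k2, 2; split; solveD.
  - by exists k2, 0; split; solveD. }
{ case: (ltngtP k k2) => Hc.
  - case: (ltnP k.+1 k2) => Hc2.
    + by exists k2, 1; split; solveD.
    + by exists k2, 1; split; solveD.
  - case: (ltnP k2.+1 k) => Hc2.
    + by exists k2.+1, 1; split; solveD.
    + by exists k2.+1, 0; split; solveD.
  - by exists k2, 1; split; solveD. }
{ case: (ltngtP k k2) => Hc.
  - case: (ltnP k.+1 k2) => Hc2.
    + by exists (k2 - 1), 4; split; solveD.
    + by exists (k2 - 1), 4; split; solveD.
  - case: (ltnP k2.+1 k) => Hc2.
    + by exists k2, 4; split; solveD.
    + by exists k2, 4; split; solveD.
  - by exists k2, 0; split; solveD. }
{ case: (ltngtP k k2) => Hc.
  - case: (ltnP k.+1 k2) => Hc2.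
    + by exists k2, 3; split; solveD.
    + by exists k2, 3; split; solveD.
  - case: (ltnP k2.+1 k) => Hc2.
    + by exists k2.+1, 3; split; solveD.
    + by exists k2.+1, 0; split; solveD.
  - by exists k2, 3; split; solveD. }
{ case: (ltngtP k k2) => Hc.
  - case: (ltnP k.+1 k2) => Hc2.
    + by exists (k2 - 1), 2; split; solveD.
    + by exists (k2 - 1), 2; split; solveD.
  - case: (ltnP k2.+1 k) => Hc2.
    + by exists k2, 1; split; solveD.
    + by exists k2, 1; split; solveD.
  - by exists k2, 1; split; solveD. }
{ case: (ltngtP k k2) => Hc.
  - case: (ltnP k.+1 k2) => Hc2.
    + by exists (k2 - 1), 2; split; solveD.
    + by exists (k2 - 1), 2; split; solveD.
  - case: (ltnP k2.+1 k) => Hc2.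
    + by exists k2, 2; split; solveD.
    + by exists k2, 2; split; solveD.
  - exfalso; lia. }
{ case: (ltngtP k k2) => Hc.
  - case: (ltnP k.+1 k2) => Hc2.
    + by exists k2, 1; split; solveD.
    + by exists k2, 1; split; solveD.
  - case: (ltnP k2.+1 k) => Hc2.
    + by exists k2.+1, 1; split; solveD.
    + by exists k2.+1, 1; split; solveD.
  - by exists k2, 1; split; solveD. }
{ case: (ltngtP k k2) => Hc.
  - case: (ltnP k.+1 k2) => Hc2.
    + by exists (k2 - 1), 4; split; solveD.
    + by exists k2, 0; split; solveD.
  - case: (ltnP k2.+1 k) => Hc2.
    + by exists k2, 4; split; solveD.
    + by exists k2, 4; split; solveD.
  - by exists k2, 0; split; solveD. }
{ case: (ltngtP k k2) => Hc.
  - case: (ltnP k.+1 k2) => Hc2.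
    + by exists k2, 3; split; solveD.
    + by exists k2, 3; split; solveD.
  - case: (ltnP k2.+1 k) => Hc2.
    + by exists k2.+1, 0; split; solveD.
    + by exists k2.+1, 0; split; solveD.
  - by exists k2, 3; split; solveD. }
{ case: (ltngtP k k2) => Hc.
  - case: (ltnP k.+1 k2) => Hc2.
    + by exists (k2 - 1), 2; split; solveD.
    + by exists (k2 - 1), 2; split; solveD.
  - case: (ltnP k2.+1 k) => Hc2.
    + by exists k2, 1; split; solveD.
    + by exists k2, 1; split; solveD.
  - by exists k2, 1; split; solveD. }
{ case: (ltngtP k k2) => Hc.
  - case: (ltnP k.+1 k2) => Hc2.
    + by exists (k2 - 1), 2; split; solveD.
    + by exists (k2 - 1), 2; split; solveD.
  - case: (ltnP k2.+1 k) => Hc2.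
    + by exists k2, 2; split; solveD.
    + by exists k2, 2; split; solveD.
  - by exists k2, 2; split; solveD. }
{ case: (ltngtP k k2) => Hc.
  - case: (ltnP k.+1 k2) => Hc2.
    + by exists k2, 1; split; solveD.
    + by exists k2, 1; split; solveD.
  - case: (ltnP k2.+1 k) => Hc2.
    + by exists k2.+1, 1; split; solveD.
    + by exists k2.+1, 1; split; solveD.
  - exfalso; lia. }
{ case: (ltngtP k k2) => Hc.
  - case: (ltnP k.+1 k2) => Hc2.
    + by exists (k2 - 1), 4; split; solveD.
    + by exists k2, 0; split; solveD.
  - case: (ltnP k2.+1 k) => Hc2.
    + by exists k2, 4; split; solveD.
    + by exists k2, 4; split; solveD.
  - by exists k2, 0; split; solveD. }
{ case: (ltngtP k k2) => Hc.
  - case: (ltnP k.+1 k2) => Hc2.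
    + by exists k2, 3; split; solveD.
    + by exists k2, 3; split; solveD.
  - case: (ltnP k2.+1 k) => Hc2.
    + by exists k2.+1, 0; split; solveD.
    + by exists k2.+1, 0; split; solveD.
  - by exists k2.+1, 0; split; solveD. }
{ case: (ltngtP k k2) => Hc.
  - case: (ltnP k.+1 k2) => Hc2.
    + by exists (k2 - 1), 4; split; solveD.
    + by exists (k2 - 1), 4; split; solveD.
  - case: (ltnP k2.+1 k) => Hc2.
    + by exists k2, 3; split; solveD.
    + by exists k2, 3; split; solveD.
  - by exists k2, 3; split; solveD. }
{ case: (ltngtP k k2) => Hc.
  - case: (ltnP k.+1 k2) => Hc2.
    + by exists (k2 - 1), 2; split; solveD.
    + by exists k2, 0; split; solveD.
  - case: (ltnP k2.+1 k) => Hc2.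
    + by exists k2, 2; split; solveD.
    + by exists k2, 2; split; solveD.
  - by exists k2, 0; split; solveD. }
{ case: (ltngtP k k2) => Hc.
  - case: (ltnP k.+1 k2) => Hc2.
    + by exists k2, 1; split; solveD.
    + by exists k2, 1; split; solveD.
  - case: (ltnP k2.+1 k) => Hc2.
    + by exists k2.+1, 0; split; solveD.
    + by exists k2.+1, 0; split; solveD.
  - by exists k2, 1; split; solveD. }
{ case: (ltngtP k k2) => Hc.
  - case: (ltnP k.+1 k2) => Hc2.
    + by exists (k2 - 1), 4; split; solveD.
    + by exists (k2 - 1), 4; split; solveD.
  - case: (ltnP k2.+1 k) => Hc2.
    + by exists k2, 4; split; solveD.
    + by exists k2, 4; split; solveD.
  - exfalso; lia. }
{ case: (ltngtP k k2) => Hc.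
  - case: (ltnP k.+1 k2) => Hc2.
    + by exists k2, 3; split; solveD.
    + by exists k2, 3; split; solveD.
  - case: (ltnP k2.+1 k) => Hc2.
    + by exists k2.+1, 3; split; solveD.
    + by exists k2.+1, 3; split; solveD.
  - by exists k2, 3; split; solveD. }
{ case: (ltngtP k k2) => Hc.
  - case: (ltnP k.+1 k2) => Hc2.
    + by exists (k2 - 1), 4; split; solveD.
    + by exists (k2 - 1), 4; split; solveD.
  - case: (ltnP k2.+1 k) => Hc2.
    + by exists k2, 3; split; solveD.
    + by exists k2, 3; split; solveD.
  - by exists k2, 3; split; solveD. }
{ case: (ltngtP k k2) => Hc.
  - case: (ltnP k.+1 k2) => Hc2.
    + by exists (k2 - 1), 2; split; solveD.
    + by exists k2, 0; split; solveD.
  - case: (ltnP k2.+1 k) => Hc2.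
    + by exists k2, 2; split; solveD.
    + by exists k2, 2; split; solveD.
  - by exists k2, 0; split; solveD. }
{ case: (ltngtP k k2) => Hc.
  - case: (ltnP k.+1 k2) => Hc2.
    + by exists k2, 1; split; solveD.
    + by exists k2, 1; split; solveD.
  - case: (ltnP k2.+1 k) => Hc2.
    + by exists k2.+1, 0; split; solveD.
    + by exists k2.+1, 0; split; solveD.
  - by exists k2.+1, 0; split; solveD. }
{ case: (ltngtP k k2) => Hc.
  - case: (ltnP k.+1 k2) => Hc2.
    + by exists (k2 - 1), 4; split; solveD.
    + by exists (k2 - 1), 4; split; solveD.
  - case: (ltnP k2.+1 k) => Hc2.
    + by exists k2, 4; split; solveD.
    + by exists k2, 4; split; solveD.
  - by exists k2, 4; split; solveD. }
{ case: (ltngtP k k2) => Hc.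
  - case: (ltnP k.+1 k2) => Hc2.
    + by exists k2, 3; split; solveD.
    + by exists k2, 3; split; solveD.
  - case: (ltnP k2.+1 k) => Hc2.
    + by exists k2.+1, 3; split; solveD.
    + by exists k2.+1, 3; split; solveD.
  - exfalso; lia. }
Qed.

Section Graph.
Variable h : nat.

Lemma cpos : 0 < 2 * h + 1. Proof. by rewrite addn1. Qed.
Definition mkv (r c : nat) : Lvert h := (inord r, Ordinal (ltn_pmod c cpos)).

Lemma mkv_eq r c r' c' : r < 2 -> r' < 2 -> c < 2 * h + 1 -> c' < 2 * h + 1 ->
  (mkv r c == mkv r' c') = (r == r') && (c == c').
Proof.
move=> H1 H2 H3 H4; rewrite /mkv xpair_eqE -!val_eqE /= !inordK //.
by rewrite !modn_small.
Qed.

Lemma mkv_val (u : Lvert h) : u = mkv u.1 u.2.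
Proof.
case: u => a b; rewrite /mkv /=; congr (_, _); apply: val_inj => /=.
  by rewrite inordK.
by rewrite modn_small.
Qed.

Lemma Ladj_mkv r c r' c' : r < 2 -> r' < 2 -> c < 2 * h + 1 -> c' < 2 * h + 1 ->
  Ladj (mkv r c) (mkv r' c') =
  ((r == r') && ((c.+1 == c') || (c'.+1 == c))) || [&& c == c', r != r' & ~~ odd c].
Proof.
move=> H1 H2 H3 H4; rewrite /Ladj -!val_eqE /= !inordK // !modn_small //.
Qed.

Definition eset (n : nat) : {set Lvert h} :=
  [set mkv (e1r (n %% 5)) (e1c (n %/ 5) (n %% 5)); mkv (e2r (n %% 5)) (e2c (n %/ 5) (n %% 5))].

Lemma eset_is (i : 'I_(5 * h + 1)) : is_Ledge (eset i).
Proof.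
apply/existsP; exists (mkv (e1r (i %% 5)) (e1c (i %/ 5) (i %% 5))).
apply/existsP; exists (mkv (e2r (i %% 5)) (e2c (i %/ 5) (i %% 5))).
rewrite /eset eqxx andbT.
have Ht : i %% 5 < 5 by rewrite ltn_pmod.
have Hi : 5 * (i %/ 5) + i %% 5 < 5 * h + 1 by have := ltn_ord i; lia.
case: (Erange h (i %/ 5) (i %% 5) Ht Hi) => ????.
rewrite Ladj_mkv //.
move: Ht Hi; move: (i %% 5) (i %/ 5) => t k.
dest t; rewrite /e1r /e2r /e1c /e2c /= => _; rewrite ?oddD ?oddM /=; lia.
Qed.

Definition enc (i : 'I_(5 * h + 1)) : Ledge h := exist _ (eset i) (eset_is i).

Lemma codeP (i : 'I_(5 * h + 1)) : i %% 5 < 5 /\ 5 * (i %/ 5) + i %% 5 < 5 * h + 1.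
Proof. split; [by rewrite ltn_pmod | have := ltn_ord i; lia]. Qed.

Lemma enc_inj : injective enc.
Proof.
move=> i j /(congr1 val) /= E.
case: (codeP i) => Hti Hi; case: (codeP j) => Htj Hj.
case: (Erange h _ _ Hti Hi) => ????; case: (Erange h _ _ Htj Hj) => ????.
have m1 : mkv (e1r (i %% 5)) (e1c (i %/ 5) (i %% 5)) \in eset j by rewrite -E !inE eqxx.
have m2 : mkv (e2r (i %% 5)) (e2c (i %/ 5) (i %% 5)) \in eset j by rewrite -E !inE eqxx orbT.
rewrite !inE !mkv_eq // in m1 m2.
have := Dinj (i %/ 5) (i %% 5) (j %/ 5) (j %% 5) Hti Htj m1 m2.
move=> H; apply: val_inj => /=; lia.
Qed.

Lemma set2I (T : finType) (a b c d : T) :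
  ([set a; b] :&: [set c; d] != set0) = [|| a == c, a == d, b == c | b == d].
Proof.
apply/set0Pn/idP.
  case=> x; rewrite !inE => /andP [/orP [] /eqP -> /orP [] /eqP ->]; rewrite eqxx ?orbT //.
case/or4P => /eqP E.
- by exists a; rewrite !inE E !eqxx.
- by exists a; rewrite !inE E !eqxx orbT.
- by exists b; rewrite !inE E !eqxx orbT.
- by exists b; rewrite !inE E !eqxx !orbT.
Qed.

Lemma lineadj_enc (i j : 'I_(5 * h + 1)) : lineadj (enc i) (enc j) = (Dn i j == 1).
Proof.
rewrite /lineadj /=.
case: (eqVneq i j) => [->|Hne].
  rewrite eqxx /=.
  case: (codeP j) => Htj Hj.
  by have /eqP -> : Dn j j == 0 by rewrite /Dn D0 ?eqxx.
rewrite (inj_eq enc_inj) Hne /=.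
case: (codeP i) => Hti Hi; case: (codeP j) => Htj Hj.
case: (Erange h _ _ Hti Hi) => ????; case: (Erange h _ _ Htj Hj) => ????.
rewrite set2I !mkv_eq // -/(share _ _ _ _) /Dn Dshare //.
by move: Hne; rewrite -val_eqE /=; lia.
Qed.

Lemma enc_surj (e : Ledge h) : exists i, e = enc i.
Proof.
case: e => A HA.
suff [i Ei] : exists i : 'I_(5 * h + 1), A = eset i.
  by exists i; apply: val_inj => /=.
case/existsP: HA => u /existsP [v /andP [Hadj /eqP EA]].
move: Hadj EA; rewrite (mkv_val u) (mkv_val v).
case: u => r c; case: v => r' c' /=.
have hr := ltn_ord r; have hr' := ltn_ord r'; have hc := ltn_ord c; have hc' := ltn_ord c'.
rewrite Ladj_mkv // => /orP [/andP [/eqP Er /orP [/eqP Ec|/eqP Ec]] | /and3P [/eqP Ec Er Ho]] ->.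
- have Hl : 5 * (c %/ 2) + 1 + c %% 2 + 2 * r < 5 * h + 1 by lia.
  exists (Ordinal Hl); rewrite /eset /=.
  by congr ([set mkv _ _; mkv _ _]); rewrite /e1r /e2r /e1c /e2c; lia.
- have Hl : 5 * (c' %/ 2) + 1 + c' %% 2 + 2 * r' < 5 * h + 1 by lia.
  exists (Ordinal Hl); rewrite /eset /= setUC.
  by congr ([set mkv _ _; mkv _ _]); rewrite /e1r /e2r /e1c /e2c; lia.
- have Hm : c %% 2 = 0 by rewrite modn2 (negbTE Ho).
  have Hl : 5 * (c %/ 2) < 5 * h + 1 by lia.
  exists (Ordinal Hl); rewrite /eset /=.
  case: (posnP r) => Hr0.
    by congr ([set mkv _ _; mkv _ _]); rewrite /e1r /e2r /e1c /e2c; move: Er; lia.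
  rewrite setUC.
  by congr ([set mkv _ _; mkv _ _]); rewrite /e1r /e2r /e1c /e2c; move: Er; lia.
Qed.
End Graph.

Section Main.
Variable h : nat.
Local Notation N := (5 * h + 1).

Lemma Dn_lip (i m j : nat) : Dn m j = 1 -> Dn i j <= Dn i m + 1.
Proof. by move=> H; rewrite /Dn; apply: Dlip; rewrite ?ltn_pmod. Qed.

Lemma Dn0 (i j : 'I_N) : (Dn i j == 0) = (i == j).
Proof.
rewrite /Dn D0; [|by rewrite ltn_pmod|by rewrite ltn_pmod].
rewrite -val_eqE /=.
apply/idP/idP => [/andP [/eqP H1 /eqP H2]|/eqP ->]; [apply/eqP; lia | by rewrite !eqxx].
Qed.

Lemma ballE k (i j : 'I_N) :
  (enc h j \in ball (@lineadj h) k (enc h i)) = (Dn i j <= k).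
Proof.
elim: k j => [|k IH] j.
  by rewrite /ball /= in_set1 (inj_eq (enc_inj h)) leqn0 Dn0 eq_sym.
rewrite /ball iterS -/(ball _ k _) in_setU in_set.
apply/idP/idP.
  case/orP => [|/existsP [z /andP [Hz Hadj]]]; first by rewrite IH => H; lia.
  have [m Em] := enc_surj h z; subst z.
  rewrite IH in Hz; rewrite (lineadj_enc h) in Hadj.
  move/eqP: Hadj => Hadj.
  by have := Dn_lip i m j Hadj; lia.
move=> H; case: (leqP (Dn i j) k) => Hk; first by rewrite IH Hk.
have Hne : i != j by rewrite -Dn0; lia.
case: (codeP h i) => Hti Hi; case: (codeP h j) => Htj Hj.
have Hne' : (i %/ 5 != j %/ 5) || (i %% 5 != j %% 5).
  by move: Hne; rewrite -val_eqE /=; lia.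
have [k3 [t3 [Ht3 Hm Hd1 Hd2]]] := Dpred h _ _ _ _ Hti Htj Hi Hj Hne'.
set m : 'I_N := Ordinal Hm.
have Hm5 : m %/ 5 = k3 by rewrite /=; lia.
have Hm5' : m %% 5 = t3 by rewrite /=; lia.
apply/orP; right; apply/existsP; exists (enc h m).
rewrite IH (lineadj_enc h) /Dn Hm5 Hm5' Hd2 eqxx andbT.
by move: Hd1; rewrite -/(Dn i j) => Hd1; lia.
Qed.
End Main.

Lemma sum_lt M d : \sum_(k < M) (k < d) = minn d M.
Proof. elim: M => [|M IH]; first by rewrite big_ord0 minn0. rewrite big_ord_recr /= IH; lia. Qed.

Lemma sum_pairs (T : finType) (F : T -> T -> nat) :
  (forall x y, F x y = F y x) -> (forall x, F x x = 0) ->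
  2 * \sum_x \sum_(y | enum_rank x < enum_rank y) F x y = \sum_x \sum_y F x y.
Proof.
move=> Fs F0.
have Hs : forall x, \sum_y F x y =
   \sum_(y | enum_rank x < enum_rank y) F x y + \sum_(y | enum_rank y < enum_rank x) F x y.
  move=> x; rewrite (bigID (fun y => enum_rank x < enum_rank y)) /=; congr (_ + _).
  rewrite (bigID (fun y => enum_rank y < enum_rank x)) /= [X in _ + X]big1 ?addn0.
    by apply: eq_bigl => y; case: ltngtP.
  move=> y /andP [H1 H2].
  have : enum_rank x = enum_rank y by apply/val_inj => /=; lia.
  by move/enum_rank_inj => ->.
under [RHS]eq_bigr => x _ do rewrite Hs.
rewrite big_split /= mul2n -addnn; congr (_ + _).
rewrite (exchange_big_dep xpredT) //=.
by apply: eq_bigr => y _; apply: eq_bigr => x _; rewrite Fs.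
Qed.

Section Main2.
Variable h : nat.
Local Notation N := (5 * h + 1).

Lemma surjb (e : Ledge h) : exists i, enc h i == e.
Proof. by case: (enc_surj h e) => i ->; exists i. Qed.

Definition dec (e : Ledge h) : 'I_N := xchoose (surjb e).

Lemma enc_bij : bijective (enc h).
Proof.
exists dec.
  by move=> i; apply: (enc_inj h); apply/eqP; exact: (xchooseP (surjb (enc h i))).
by move=> e; apply/eqP; exact: (xchooseP (surjb e)).
Qed.

Lemma cardL : #|Ledge h| = N.
Proof. by rewrite -(bij_eq_card enc_bij) card_ord. Qed.

Lemma edist_enc (i j : 'I_N) : edist (enc h i) (enc h j) = Dn i j.
Proof.
rewrite /edist /gdist cardL.
under eq_bigr => k _ do rewrite ballE -ltnNge.
rewrite sum_lt; apply/minn_idPl; apply: ltnW.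
case: (codeP h i) => Hti Hi; case: (codeP h j) => Htj Hj.
exact: Dbound.
Qed.

Lemma edist_sym (e f : Ledge h) : edist e f = edist f e.
Proof.
case: (enc_surj h e) => i ->; case: (enc_surj h f) => j ->.
by rewrite !edist_enc Dnsym.
Qed.

Lemma edist0 (e : Ledge h) : edist e e = 0.
Proof.
case: (enc_surj h e) => i ->; rewrite edist_enc; apply/eqP.
by rewrite Dn0.
Qed.

Lemma sum_enc (f : nat -> nat) :
  \sum_(e : Ledge h) \sum_(g : Ledge h) f (edist e g) = SS f h.
Proof.
rewrite (reindex (enc h)) /=; last by apply: onW_bij; exact: enc_bij.
under eq_bigr => i _.
  rewrite (reindex (enc h)) /=; last by apply: onW_bij; exact: enc_bij.
  under eq_bigr => j _ do rewrite edist_enc.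
  over.
rewrite /SS big_mkord; apply: eq_bigr => i _; by rewrite big_mkord.
Qed.

Lemma We_eq : 6 * We h = h * (50 * h ^ 2 + 69 * h + 43).
Proof.
have H := @sum_pairs _ _ edist_sym edist0.
have := sum_enc id; rewrite /= -H -/(We h) => E.
have := SS1 h; rewrite -E; lia.
Qed.

Lemma We2_eq : 6 * We2 h = 50 * h ^ 4 + 92 * h ^ 3 + 85 * h ^ 2 + 115 * h.
Proof.
have H := @sum_pairs _ (fun e f => edist e f ^ 2) (fun e f => congr1 (expn^~ 2) (edist_sym e f))
  (fun e => congr1 (expn^~ 2) (edist0 e)).
have := sum_enc (fun x => x ^ 2); rewrite /= -H -/(We2 h) => E.
have := SS2 h; rewrite -E; lia.
Qed.
End Main2.

Local Open Scope ring_scope.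

Theorem mainTheorem5 (h : nat) (hh : (1 <= h)%N) :
  (We h)%:R = (1 / 6 : rat) * h%:R * (50 * h%:R ^+ 2 + 69 * h%:R + 43)
  /\ WWe h = (1 / 6 : rat) * h%:R * (25 * h%:R ^+ 3 + 71 * h%:R ^+ 2 + 77 * h%:R + 79).
Proof.
have E1 := congr1 (fun n => n%:R : rat) (We_eq h).
have E2 := congr1 (fun n => n%:R : rat) (We2_eq h).
rewrite /= ?natrM ?natrD ?natrM ?natrX in E1. rewrite /= ?natrM ?natrD ?natrM ?natrX in E2.
split.
  have -> : (We h)%:R = (6%:R * (We h)%:R) / 6 :> rat by field.
  by rewrite E1; field.
rewrite /WWe.
have -> : (We h)%:R = (6%:R * (We h)%:R) / 6 :> rat by field.
have -> : (We2 h)%:R = (6%:R * (We2 h)%:R) / 6 :> rat by field.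
by rewrite E1 E2; field.
Qed.
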